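(* Let $v$ be a normalized, non-negative, submodular (not necessarily monotone) valuation, and run the deterministic mechanism BFM-VM described in the context with $\ell=2$ and $\alpha=1+\sqrt{3}$, with all sellers behaving truthfully. Then the output $S^*$ satisfies $$v(S^* )\ \ge\ \frac{v(O)}{12+4\sqrt{3}},$$ where $O$ is an optimal solution of $\max\{v(S): S\subseteq\mathcal{N},\ c(S)\le B\}$. Moreover, counting each evaluation of $v$ as one step, BFM-VM runs in $\mathcal{O}(n\log n)$ time.
   Context: Setting. $\mathcal{N}$ is a finite set of $n$ sellers. The valuation $v:2^{\mathcal{N}}\to\mathbb{R}_{\ge 0}$ satisfies $v(\emptyset)=0$ and is submodular (for $X\subseteq Y\subseteq\mathcal{N}$ and $u\notin Y$, $v(u\mid Y)\le v(u\mid X)$), where $v(S\mid T)=v(S\cup T)-v(T)$, $v(u\mid T)=v(\{u\}\mid T)$, $v(u)=v(\{u\})$. Each seller $u$ has a private cost $c(u)\ge 0$; $c(X)=\sum_{u\in X}c(u)$. $B>0$ is the budget, $[\ell]=\{1,\dots,\ell\}$. Sellers behave truthfully: a seller $u$ offered price $q$ accepts iff $c(u)\le q$. Mechanism BFM-VM (inputs $B$, $\alpha>1$, $\ell\in\{1,2\}$): 1. Offer every seller the price $B$; let $R$ be the set of sellers who accept, and set $p(u)=B$ for $u\in R$. 2. Set $t=1$, $\rho_1=\max_{u\in R}v(u)$, $S_{1,1}=\{u_0\}$ for some $u_0\in\arg\max_{u\in R}v(u)$, and (if $\ell=2$) $S_{2,1}=\emptyset$. 3. Repeat rounds: set $t\leftarrow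 t+1$, $\rho_t=\alpha\rho_{t-1}$, $S_{i,t}=\emptyset$ for $i\in[\ell]$. Process the sellers $u\in R\setminus\bigcup_{i=1}^{\ell}S_{i,t-1}$ one at a time in a fixed order. For each such $u$: pick $j\in\arg\max_{i\in[\ell]}v(u\mid S_{i,t})$ (current contents); update $p(u)\leftarrow\min\{p(u),\ v(u\mid S_{j,t})/(\rho_t/B)\}$ and offer $p(u)$ to $u$. If $u$ accepts: if $v(S_{j,t}\cup\{u\})>\rho_t$, end the round immediately; otherwise add $u$ to $S_{j,t}$. If $u$ rejects, remove $u$ from $R$. After the round, stop if $R\setminus\bigcup_{i=1}^{\ell}(S_{i,t-1}\cup S_{i,t})=\emptyset$; otherwise start another round. 4. Let $M$ be the final value of $t$. Output $S^*\in\arg\max_{A\in\{S_{i,t}: i\in[\ell],\ t\in\{M-1,M\}\}}v(A)$, paying each $u\in S^*$ its current price $p(u)$. *)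

(* Defs.v *)
From HB Require Import structures.
From mathcomp Require Import all_boot all_order all_algebra.
From mathcomp Require Import reals.
Set Implicit Arguments. Unset Strict Implicit. Unset Printing Implicit Defensive.
Import Order.TTheory GRing.Theory Num.Theory.
Local Open Scope ring_scope.

(* Sellers are 'I_n; the fixed processing order is the natural order of 'I_n
   (any fixed order is obtained by relabelling, v and c being arbitrary). *)

Section BFMVM.
Variables (R : realType) (n : nat).
Variables (v : {set 'I_n} -> R) (c : 'I_n -> R) (B : R).
(* u0 : the chosen maximiser of v({u}) over the accepting sellers (a hypothesis
   of the theorem); tie t u : tie-breaking rule for j in argmax_i v(u | S_{i,t})
   when both marginals are equal (true = choose j = 2). Since each seller is
   processed at most once per round, quantifying over all such functions covers
   all possible tie-breaking behaviours. *)
Variables (u0 : 'I_n) (tie : nat -> 'I_n -> bool).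

Definition submodular_val :=
  forall (X Y : {set 'I_n}) (u : 'I_n), X \subset Y -> u \notin Y ->
    v (u |: Y) - v Y <= v (u |: X) - v X.

Definition cost_of (S : {set 'I_n}) : R := \sum_(u in S) c u.

Definition marg (S : {set 'I_n}) (u : 'I_n) : R := v (u |: S) - v S.

Definition alpha : R := 1 + Num.sqrt 3.

Definition rho (t : nat) : R := alpha ^+ t.-1 * v [set u0].

Record rstate := RS {
  rR : {set 'I_n};
  rp : 'I_n -> R;
  rS1 : {set 'I_n};
  rS2 : {set 'I_n};
  rend : bool;            (* round ended early *)
  rcost : nat             (* number of evaluations of v so far *)
}.

(* processing seller u in round t; evaluates v(S1 ∪ u), v(S1), v(S2 ∪ u), v(S2)
   (4 evaluations; the test v(S_j ∪ {u}) > rho_t reuses one of them). *)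
Definition step (t : nat) (st : rstate) (u : 'I_n) : rstate :=
  if rend st then st else
  let m1 := marg (rS1 st) u in
  let m2 := marg (rS2 st) u in
  let j2 := (m1 < m2) || ((m1 == m2) && tie t u) in
  let Sj := if j2 then rS2 st else rS1 st in
  let mj := if j2 then m2 else m1 in
  let pu := Num.min (rp st u) (mj / (rho t / B)) in
  let p' := fun w => if w == u then pu else rp st w in
  let cost' := (rcost st + 4)%N in
  if c u <= pu then
    if rho t < v (u |: Sj) then RS (rR st) p' (rS1 st) (rS2 st) true cost'
    else if j2 then RS (rR st) p' (rS1 st) (u |: rS2 st) false cost'
    else RS (rR st) p' (u |: rS1 st) (rS2 st) false cost'
  else RS (rR st :\ u) p' (rS1 st) (rS2 st) false cost'.

(* state between rounds: after round t we store S_{i,t-1} (prev) and S_{i,t} (cur) *)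
Record mstate := MS {
  mR : {set 'I_n};
  mp : 'I_n -> R;
  mprev1 : {set 'I_n};
  mprev2 : {set 'I_n};
  mcur1 : {set 'I_n};
  mcur2 : {set 'I_n};
  mcost : nat
}.

Definition round (t : nat) (ms : mstate) : mstate :=
  let todo := [seq u <- enum 'I_n | u \in mR ms :\: (mcur1 ms :|: mcur2 ms)] in
  let st := foldl (step t) (RS (mR ms) (mp ms) set0 set0 false (mcost ms)) todo in
  MS (rR st) (rp st) (mcur1 ms) (mcur2 ms) (rS1 st) (rS2 st) (rcost st).

(* steps 1-2: offer B to everybody, R = accepting sellers, p = B,
   S_{1,1} = {u0}, S_{2,1} = ∅; computing rho_1 costs #|R| evaluations. *)
Definition init_state : mstate :=
  let R1 := [set u | c u <= B] in
  MS R1 (fun _ => B) set0 set0 [set u0] set0 #|R1|.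

(* state k = state after round k+1 *)
Fixpoint state (k : nat) : mstate :=
  match k with
  | 0 => init_state
  | k'.+1 => round k.+1 (state k')
  end.

(* stopping test after a round (only used for rounds t >= 2, i.e. k >= 1) *)
Definition stops (k : nat) : bool :=
  let ms := state k in
  mR ms :\: (mprev1 ms :|: mprev2 ms :|: mcur1 ms :|: mcur2 ms) == set0.

Definition better (A A' : {set 'I_n}) := if v A < v A' then A' else A.
Definition output (ms : mstate) : {set 'I_n} :=
  foldl better (mprev1 ms) [:: mprev2 ms; mcur1 ms; mcur2 ms].

(* total number of evaluations of v (4 more for the final argmax) *)
Definition total_cost (ms : mstate) : nat := (mcost ms + 4)%N.

End BFMVM.

(* Main.v *)
Require Import Defs.
From HB Require Import structures.
From mathcomp Require Import all_boot all_order all_algebra.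
From mathcomp Require Import reals.
From mathcomp Require Import ring lra zify.
Import Order.TTheory GRing.Theory Num.Theory.
Local Open Scope ring_scope.
Set Implicit Arguments. Unset Strict Implicit. Unset Printing Implicit Defensive.

Section Sub.
Variables (R : realType) (n : nat) (v : {set 'I_n} -> R).
Hypotheses (v0 : v set0 = 0) (vge0 : forall S, 0 <= v S) (vsub : submodular_val v).

Lemma margE S u : marg v S u = v (u |: S) - v S. Proof. by []. Qed.

Lemma marg_anti (X Y : {set 'I_n}) u : X \subset Y -> u \notin Y -> marg v Y u <= marg v X u.
Proof. exact: vsub. Qed.

Lemma sum_bound_seq (s : seq 'I_n) (S : {set 'I_n}) : uniq s -> (forall u, u \in s -> u \notin S) ->
  v (S :|: [set x in s]) <= v S + \sum_(u <- s) marg v S u.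
Proof.
elim: s => [|u s IH] /= Hu Hs.
  have -> : [set x in [::]] = set0 :> {set 'I_n} by apply/setP => x; rewrite !inE.
  by rewrite setU0 big_nil addr0.
case/andP: Hu => us us'.
have -> : S :|: [set x in u :: s] = u |: (S :|: [set x in s]).
  by apply/setP => x; rewrite !inE; case: (x == u); case: (x \in S); case: (x \in s).
rewrite big_cons.
have uS : u \notin S by apply: Hs; rewrite inE eqxx.
have H1 : v (u |: (S :|: [set x in s])) - v (S :|: [set x in s]) <= marg v S u.
  apply: marg_anti; first exact: subsetUl.
  by rewrite !inE negb_or uS us.
have H2 : v (S :|: [set x in s]) <= v S + \sum_(u <- s) marg v S u.
  by apply: IH => // w ws; apply: Hs; rewrite inE ws orbT.
lra.
Qed.

Lemma sum_bound (S W : {set 'I_n}) : (forall u, u \in W -> u \notin S) ->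
  v (S :|: W) <= v S + \sum_(u in W) marg v S u.
Proof.
move=> H; rewrite -{1}(set_enum W) -big_enum.
apply: sum_bound_seq; first exact: enum_uniq.
by move=> u; rewrite mem_enum; apply: H.
Qed.

Lemma gen_sub_seq (s : seq 'I_n) (X Y : {set 'I_n}) : X \subset Y -> (forall u, u \in s -> u \notin Y) ->
  v (Y :|: [set x in s]) - v Y <= v (X :|: [set x in s]) - v X.
Proof.
move=> XY; elim: s => [|u s IH] Hs.
  have -> : [set x in [::]] = set0 :> {set 'I_n} by apply/setP => x; rewrite !inE.
  by rewrite !setU0 !subrr.
have IH' : v (Y :|: [set x in s]) - v Y <= v (X :|: [set x in s]) - v X.
  by apply: IH => w ws; apply: Hs; rewrite inE ws orbT.
have uY : u \notin Y by apply: Hs; rewrite inE eqxx.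
have E : forall Z, Z :|: [set x in u :: s] = u |: (Z :|: [set x in s]).
  by move=> Z; apply/setP => x; rewrite !inE; case: (x == u); case: (x \in Z); case: (x \in s).
rewrite !E.
case us: (u \in s).
  have E2 : forall Z, u |: (Z :|: [set x in s]) = Z :|: [set x in s].
    by move=> Z; apply/setP => x; rewrite !inE; case: eqP => // ->; rewrite us orbT.
  by rewrite !E2.
have H1 : v (u |: (Y :|: [set x in s])) - v (Y :|: [set x in s]) <=
          v (u |: (X :|: [set x in s])) - v (X :|: [set x in s]).
  apply: vsub; first by apply: setSU.
  by rewrite !inE negb_or uY us.
lra.
Qed.

Lemma lattice (P Q : {set 'I_n}) : v (P :|: Q) + v (P :&: Q) <= v P + v Q.
Proof.
have := @gen_sub_seq (enum (Q :\: P)) (P :&: Q) P (subsetIl _ _).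
rewrite set_enum.
have E1 : P :|: (Q :\: P) = P :|: Q.
  by apply/setP => x; rewrite !inE; case: (x \in P); case: (x \in Q).
have E2 : P :&: Q :|: (Q :\: P) = Q.
  by apply/setP => x; rewrite !inE; case: (x \in P); case: (x \in Q).
rewrite E1 E2 => H.
have : v (P :|: Q) - v P <= v Q - v (P :&: Q).
  apply: H => u; rewrite mem_enum !inE; by case/andP => /negbTE ->.
lra.
Qed.

Lemma subadd (P Q : {set 'I_n}) : v (P :|: Q) <= v P + v Q.
Proof. have := lattice P Q; have := vge0 (P :&: Q); lra. Qed.

Lemma split_disj (O A B : {set 'I_n}) : (forall x, x \in A -> x \notin B) ->
  v O <= v (O :|: A) + v (O :|: B).
Proof.
move=> H; have := lattice (O :|: A) (O :|: B).
have -> : (O :|: A) :&: (O :|: B) = O.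
  apply/setP => x; rewrite !inE; case xO: (x \in O) => //=.
  case xA: (x \in A) => //=; by rewrite (negbTE (H x xA)).
have := vge0 (O :|: A :|: (O :|: B)); lra.
Qed.

Lemma vsingle_bound (S : {set 'I_n}) (r : R) : (forall u, u \in S -> v [set u] <= r) ->
  v S <= r *+ #|S|.
Proof.
move=> H; have H1 : v (set0 :|: S) <= v set0 + \sum_(u in S) marg v set0 u.
  by apply: sum_bound => u _; rewrite inE.
move: H1; rewrite set0U v0 add0r => H1; apply: (le_trans H1).
rewrite -sumr_const; apply: ler_sum => u uS.
by rewrite margE setU0 v0 subr0; apply: H.
Qed.

End Sub.

Unset Implicit Arguments. Unset Strict Implicit.


Arguments state : simpl never.
Arguments rho : simpl never.

Section Mech.
Variables (R : realType) (n : nat) (v : {set 'I_n} -> R) (c : 'I_n -> R) (B : R) (u0 : 'I_n) (tie : nat -> 'I_n -> bool).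
Hypotheses (v0 : v set0 = 0) (vge0 : forall S, 0 <= v S) (vsub : submodular_val v)
  (cge0 : forall u, 0 <= c u) (Bpos : 0 < B) (cu0 : c u0 <= B)
  (u0max : forall u, c u <= B -> v [set u] <= v [set u0]).

Local Notation rho1 := (v [set u0]).
Local Notation rh := (rho v u0).
Local Notation stp := (step v c B u0 tie).

Lemma sqrt3_ge1 : 1 <= Num.sqrt (3 : R).
Proof. have h : Num.sqrt (1:R) <= Num.sqrt 3 by apply: ler_wsqrtr; lra. by rewrite sqrtr1 in h. Qed.

Lemma alpha_ge2 : 2 <= alpha R.
Proof. rewrite /alpha; have := sqrt3_ge1; lra. Qed.

Lemma rho1_ge0 : 0 <= rho1. Proof. exact: vge0. Qed.

Lemma rho_ge0 t : 0 <= rh t.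
Proof.
rewrite /rho; apply: mulr_ge0; last exact: rho1_ge0.
apply: exprn_ge0; have := alpha_ge2; lra.
Qed.

Lemma rho_gt0 t : 0 < rho1 -> 0 < rh t.
Proof.
move=> h; rewrite /rho; apply: mulr_gt0 => //.
apply: exprn_gt0; have := alpha_ge2; lra.
Qed.

Lemma step_frozen t st u : rend st -> stp t st u = st.
Proof. by move=> Hr; rewrite /step Hr. Qed.

Definition upd (p : 'I_n -> R) u pu := fun w => if w == u then pu else p w.

Lemma step_spec t st u : ~~ rend st -> exists j2 : bool, exists pu : R,
  [/\ (if j2 then marg v (rS1 st) u else marg v (rS2 st) u) <= (if j2 then marg v (rS2 st) u else marg v (rS1 st) u),
      pu = Num.min (rp st u) ((if j2 then marg v (rS2 st) u else marg v (rS1 st) u) / (rh t / B)) &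
      stp t st u = if c u <= pu then
         if rh t < v (u |: (if j2 then rS2 st else rS1 st)) then
           RS (rR st) (upd (rp st) u pu) (rS1 st) (rS2 st) true (rcost st + 4)
         else if j2 then RS (rR st) (upd (rp st) u pu) (rS1 st) (u |: rS2 st) false (rcost st + 4)
         else RS (rR st) (upd (rp st) u pu) (u |: rS1 st) (rS2 st) false (rcost st + 4)
       else RS (rR st :\ u) (upd (rp st) u pu) (rS1 st) (rS2 st) false (rcost st + 4)].
Proof.
move=> Hr; rewrite /step (negbTE Hr).
set m1 := marg v (rS1 st) u; set m2 := marg v (rS2 st) u.
exists ((m1 < m2) || (m1 == m2) && tie t u).
eexists; split; last reflexivity; last reflexivity.
case: ltP => /= [h|h]; first exact: ltW.
case: eqP => [->|] //= _.
Qed.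


Lemma step_shape t st u :
  [/\ rS1 st \subset rS1 (stp t st u), rS2 st \subset rS2 (stp t st u),
      rS1 (stp t st u) \subset u |: rS1 st & rS2 (stp t st u) \subset u |: rS2 st] /\
  [/\ rR (stp t st u) \subset rR st, rR st :\ u \subset rR (stp t st u)
    & (rcost (stp t st u) <= rcost st + 4)%N].
Proof.
case: (boolP (rend st)) => Hr.
  rewrite step_frozen //; split; split => //; rewrite ?subsetUr ?subsetDl ?leq_addr //.
have [j2 [pu [Hmo Hpu ->]]] := step_spec t st u Hr.
case: ifP => Ha; [case: ifP => He; [|case: j2 {Hmo Hpu He}] |];
  split; split => //=; rewrite ?subsetUr ?subsetDl ?subsetUl ?subxx //; try by apply/subsetP => x; rewrite !inE => /andP [].
Qed.

Lemma fold_mono t l st :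
  [/\ rS1 st \subset rS1 (foldl (stp t) st l), rS2 st \subset rS2 (foldl (stp t) st l),
      rR (foldl (stp t) st l) \subset rR st,
      (rcost (foldl (stp t) st l) <= rcost st + 4 * size l)%N
    & (rend st -> foldl (stp t) st l = st)].
Proof.
elim: l st => [|u l IH] st /=; first by rewrite addn0 !subxx.
have [[a1 a2 _ _] [a5 _ a7]] := step_shape t st u.
have [b1 b2 b3 b4 b5] := IH (stp t st u).
split.
- exact: subset_trans a1 b1.
- exact: subset_trans a2 b2.
- exact: subset_trans b3 a5.
- apply: (leq_trans b4); rewrite mulnS addnA leq_add2r.
  by apply: (leq_trans a7); rewrite addnC.
- by move=> Hr; have E := step_frozen t st u Hr; rewrite E in b5 *; apply: b5.
Qed.

Definition cross (A Bs : {set 'I_n}) := forall Y F : {set 'I_n}, Y \subset Bs -> A \subset F ->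
  (forall x, x \in Y -> x \notin F) -> \sum_(w in Y) marg v F w <= v Bs.

Lemma cross0 : cross set0 set0.
Proof.
move=> Y F YB _ _; have -> : Y = set0 by apply/eqP; rewrite -subset0.
by rewrite big_set0 v0.
Qed.

Lemma cross_add (A Bs : {set 'I_n}) u : cross A Bs -> cross Bs A -> u \notin A -> u \notin Bs ->
  marg v A u <= marg v Bs u -> 0 <= marg v Bs u -> cross A (u |: Bs) /\ cross (u |: Bs) A.
Proof.
move=> C1 C2 uA uB Hm Hpos; split.
  move=> Y F YB AF dis.
  have vE : v (u |: Bs) = v Bs + marg v Bs u by rewrite /marg; ring.
  case uY: (u \in Y).
    rewrite (big_setD1 u uY) /=.
    have h1 : \sum_(w in Y :\ u) marg v F w <= v Bs.
      apply: C1 => //.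
        apply/subsetP => x; rewrite !inE => /andP [xu xY].
        by move/subsetP: YB => /(_ x xY); rewrite !inE (negbTE xu).
      by move=> x; rewrite !inE => /andP [_ xY]; apply: dis.
    have h2 : marg v F u <= marg v A u by apply: vsub => //; apply: dis.
    lra.
  have h1 : \sum_(w in Y) marg v F w <= v Bs.
    apply: C1 => //; apply/subsetP => x xY.
    move/subsetP: YB => /(_ x xY); rewrite !inE; case: eqP => // xu.
    by rewrite xu uY in xY.
  lra.
move=> Y F YA BF dis; apply: C2 => //.
exact: subset_trans (subsetUr _ _) BF.
Qed.
Arguments cross_add {A Bs u}.

Record Inv (t : nat) (R0 : {set 'I_n}) (st : rstate R n) : Prop := MkInv {
 i_disj : forall x, x \in rS1 st -> x \notin rS2 st;
 i_S1R : rS1 st \subset rR st;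
 i_S2R : rS2 st \subset rR st;
 i_RR0 : rR st \subset R0;
 i_R0 : forall x, x \in R0 -> c x <= B;
 i_v1 : v (rS1 st) <= rh t;
 i_v2 : v (rS2 st) <= rh t;
 i_price : forall x, x \in rR st -> c x <= rp st x;
 i_end : rend st -> rh t < v (rS1 st) + rho1 \/ rh t < v (rS2 st) + rho1;
 i_pos : 0 < rho1 -> [/\ cross (rS1 st) (rS2 st), cross (rS2 st) (rS1 st) &
     forall x, x \in R0 :\: rR st -> forall F : {set 'I_n},
       (rS1 st \subset F \/ rS2 st \subset F) -> x \notin F -> B * marg v F x < c x * rh t]
}.

Arguments i_disj {t R0 st}. Arguments i_S1R {t R0 st}. Arguments i_S2R {t R0 st}.
Arguments i_RR0 {t R0 st}. Arguments i_R0 {t R0 st}. Arguments i_v1 {t R0 st}.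
Arguments i_v2 {t R0 st}. Arguments i_price {t R0 st}. Arguments i_end {t R0 st}. Arguments i_pos {t R0 st}.

Lemma rej_bound (mj cu p rr : R) : 0 < rr -> ~~ (cu <= Num.min p (mj / (rr / B))) -> cu <= p ->
  B * mj < cu * rr.
Proof.
move=> hr; rewrite -ltNge gt_min => /orP [h|h] hp; first lra.
have hrB : 0 < rr / B by apply: divr_gt0.
rewrite ltr_pdivrMr // in h.
rewrite -(ltr_pM2l Bpos) in h.
have -> : cu * rr = B * (cu * (rr / B)) by field; rewrite gt_eqF.
done.
Qed.
Arguments rej_bound {mj cu p rr}.


Lemma vs (X Y : {set 'I_n}) u : X \subset Y -> u \notin Y -> marg v Y u <= marg v X u.
Proof. exact: vsub. Qed.
Arguments vs {X Y u}.

Lemma acc_nonneg (mj cu p rr : R) : 0 < rr -> 0 <= cu -> cu <= Num.min p (mj / (rr / B)) -> 0 <= mj.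
Proof.
move=> hr hc; rewrite le_min => /andP [_ h].
have hrB : 0 < rr / B by apply: divr_gt0.
rewrite ler_pdivlMr // in h.
apply: le_trans h; exact: mulr_ge0 hc (ltW hrB).
Qed.
Arguments acc_nonneg {mj cu p rr}.

Lemma sing_bound (S : {set 'I_n}) u : u \notin S -> c u <= B -> v (u |: S) <= v S + rho1.
Proof.
move=> uS cu.
have h := vs (sub0set S) uS.
rewrite /marg setU0 v0 subr0 in h.
have := u0max u cu; lra.
Qed.
Arguments sing_bound {S u}.

Lemma step_inv t R0 st u : Inv t R0 st -> u \in rR st -> u \notin rS1 st -> u \notin rS2 st ->
  Inv t R0 (stp t st u).
Proof.
move=> I uR u1 u2.
case: (boolP (rend st)) => Hr; first by rewrite step_frozen.
have [j2 [pu [Hmo Hpu ->]]] := step_spec t st u Hr.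
case: I => Id I1 I2 IR I0 Iv1 Iv2 Ip Ie Ipos.
have cuB : c u <= B by apply: I0; exact: (subsetP IR u uR).
have Hpr : forall x, x \in rR st -> c u <= pu -> c x <= upd (rp st) u pu x.
  by move=> x xR hc; rewrite /upd; case: eqP => [->|_] //; apply: Ip.
case: ifP => Ha; [case: ifP => He; [|case: j2 Hmo Hpu He => Hmo Hpu He] |].
- constructor => //=.
  + by move=> x xR; apply: Hpr.
  + move=> _; case: j2 Hmo Hpu He => _ _ He.
      by right; have := sing_bound u2 cuB; lra.
    by left; have := sing_bound u1 cuB; lra.
- have Hm2 : 0 < rho1 -> 0 <= marg v (rS2 st) u.
    move=> hp; have Ha' := Ha; rewrite Hpu in Ha'; exact: (acc_nonneg (rho_gt0 t hp) (cge0 u) Ha').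
  constructor => //=.
  + move=> x x1; rewrite !inE negb_or Id // andbT; apply/eqP => xu.
    by move: x1; rewrite xu (negbTE u1).
  + by rewrite subUset sub1set uR I2.
  + by rewrite leNgt He.
  + by move=> x xR; apply: Hpr.
  + move=> hp; have [C12 C21 Rj] := Ipos hp.
    have [C1 C2] := cross_add C12 C21 u1 u2 Hmo (Hm2 hp).
    split => // x xR F [h|h] xF; apply: Rj => //; [by left | right].
    exact: subset_trans (subsetUr _ _) h.
- have Hm1 : 0 < rho1 -> 0 <= marg v (rS1 st) u.
    move=> hp; have Ha' := Ha; rewrite Hpu in Ha'; exact: (acc_nonneg (rho_gt0 t hp) (cge0 u) Ha').
  constructor => //=.
  + move=> x; rewrite !inE => /orP [/eqP ->|]; first exact: u2.
    exact: Id.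
  + by rewrite subUset sub1set uR I1.
  + by rewrite leNgt He.
  + by move=> x xR; apply: Hpr.
  + move=> hp; have [C12 C21 Rj] := Ipos hp.
    have [C1 C2] := cross_add C21 C12 u2 u1 Hmo (Hm1 hp).
    split => // x xR F [h|h] xF; apply: Rj => //; [left | by right].
    exact: subset_trans (subsetUr _ _) h.
- constructor => //=.
  + by rewrite subsetD1 I1 u1.
  + by rewrite subsetD1 I2 u2.
  + exact: subset_trans (subD1set _ _) IR.
  + move=> x; rewrite !inE => /andP [xu xR]; rewrite /upd (negbTE xu); exact: Ip.
  + move=> hp; have [C12 C21 Rj] := Ipos hp.
    split => // x; rewrite !inE negb_and negbK => /andP [/orP [/eqP ->|xR] xR0] F hF xF; last first.
      by apply: Rj => //; rewrite !inE xR xR0.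
    have Ha' := negbT Ha; rewrite Hpu in Ha'.
    have hb := rej_bound (rho_gt0 t hp) Ha' (Ip u uR).
    have hm : marg v F u <= (if j2 then marg v (rS2 st) u else marg v (rS1 st) u).
      case: hF => h.
        apply: le_trans (vs h xF) _; by case: j2 Hmo {Hpu Ha Ha' hb}.
      apply: le_trans (vs h xF) _; by case: j2 Hmo {Hpu Ha Ha' hb}.
    rewrite -(ler_pM2l Bpos) in hm.
    exact: le_lt_trans hm hb.
Qed.


Lemma fold_inv t R0 l st : uniq l -> Inv t R0 st ->
  (forall u, u \in l -> [/\ u \in rR st, u \notin rS1 st & u \notin rS2 st]) ->
  Inv t R0 (foldl (stp t) st l).
Proof.
elim: l st => [|u l IH] st //= /andP [ul ul'] I H.
have [uR u1 u2] := H u (mem_head _ _).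
apply: IH => //; first exact: step_inv.
move=> w wl; have [wR w1 w2] : [/\ w \in rR st, w \notin rS1 st & w \notin rS2 st] by apply: H; rewrite inE wl orbT.
have wu : w != u by apply/eqP => E; move: wl; rewrite E (negbTE ul).
have [[_ _ a3 a4] [_ a6 _]] := step_shape t st u.
split.
- by apply: (subsetP a6); rewrite !inE wu.
- by apply/negP => /(subsetP a3); rewrite !inE (negbTE wu) (negbTE w1).
- by apply/negP => /(subsetP a4); rewrite !inE (negbTE wu) (negbTE w2).
Qed.

Lemma step_done t st u : ~~ rend (stp t st u) ->
  u \notin rR (stp t st u) \/ u \in rS1 (stp t st u) :|: rS2 (stp t st u).
Proof.
case: (boolP (rend st)) => Hr; first by rewrite step_frozen // Hr.
have [j2 [pu [Hmo Hpu ->]]] := step_spec t st u Hr.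
case: ifP => Ha; [case: ifP => He; [|case: j2 {Hmo Hpu He}] |] => //= _.
- by right; rewrite !inE eqxx orbT.
- by right; rewrite !inE eqxx.
- by left; rewrite !inE eqxx.
Qed.

Lemma fold_done t l st : ~~ rend (foldl (stp t) st l) -> forall u, u \in l ->
  u \notin rR (foldl (stp t) st l) \/ u \in rS1 (foldl (stp t) st l) :|: rS2 (foldl (stp t) st l).
Proof.
elim: l st => [|w l IH] st //= Hr u; rewrite inE => /orP [/eqP ->|ul]; last exact: IH.
have [b1 b2 b3 _ b5] := fold_mono t l (stp t st w).
have Hr' : ~~ rend (stp t st w).
  by apply/negP => h; move: Hr; rewrite (b5 h) h.
case: (step_done t st w Hr') => [h|h].
  by left; apply/negP => /(subsetP b3); apply/negP.
right; move: h; rewrite !inE => /orP [h|h].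
  by rewrite (subsetP b1 _ h).
by rewrite (subsetP b2 _ h) orbT.
Qed.

Definition todo (ms : mstate R n) := [seq u <- enum 'I_n | u \in mR ms :\: (mcur1 ms :|: mcur2 ms)].
Definition rst t (ms : mstate R n) :=
  foldl (stp t) (RS (mR ms) (mp ms) set0 set0 false (mcost ms)) (todo ms).
Definition rs_of (ms : mstate R n) := RS (mR ms) (mp ms) (mcur1 ms) (mcur2 ms) false (mcost ms).

Lemma round_eq t ms : round v c B u0 tie t ms =
  MS (rR (rst t ms)) (rp (rst t ms)) (mcur1 ms) (mcur2 ms) (rS1 (rst t ms)) (rS2 (rst t ms)) (rcost (rst t ms)).
Proof. by []. Qed.

Definition GInv (ms : mstate R n) :=
  (forall x, x \in mR ms -> c x <= B) /\ (forall x, x \in mR ms -> c x <= mp ms x).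

Lemma rst_inv t ms : GInv ms -> Inv t (mR ms) (rst t ms).
Proof.
move=> [G1 G2]; apply: fold_inv.
- by rewrite filter_uniq // enum_uniq.
- constructor => //=; rewrite ?sub0set ?subxx ?v0 ?rho_ge0 //.
  + by move=> x; rewrite inE.
  + move=> hp; split; try exact: cross0.
    by move=> x; rewrite setDv inE.
- move=> u; rewrite mem_filter !inE => /andP [/andP [_ uR] _]; split => //.
Qed.

Lemma round_inv t ms : GInv ms -> Inv t (mR ms) (rs_of (round v c B u0 tie t ms)).
Proof.
move=> G; have [I1 I2 I3 I4 I5 I6 I7 I8 _ I10] := rst_inv t ms G.
by rewrite round_eq; constructor.
Qed.

Definition stopc (ms : mstate R n) :=
  mR ms :\: (mprev1 ms :|: mprev2 ms :|: mcur1 ms :|: mcur2 ms) == set0.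

Lemma round_stop t ms : GInv ms -> ~~ stopc (round v c B u0 tie t ms) ->
  rh t < v (mcur1 (round v c B u0 tie t ms)) + rho1 \/
  rh t < v (mcur2 (round v c B u0 tie t ms)) + rho1.
Proof.
move=> G; rewrite round_eq /stopc /=.
case: (boolP (rend (rst t ms))) => Hr.
  by move=> _; have [_ _ _ _ _ _ _ _ Ie _] := rst_inv t ms G; apply: Ie.
move/negP => []; apply/eqP/setP => x; rewrite !inE.
have [_ _ b3 _ _] := fold_mono t (todo ms) (RS (mR ms) (mp ms) set0 set0 false (mcost ms)).
apply/negP => /andP [hx xR].
have xR0 : x \in mR ms by exact: (subsetP b3 x xR).
move: hx; rewrite !negb_or => /andP [/andP [/andP [hp1 hp2] hc1] hc2].
have xt : x \in todo ms by rewrite mem_filter mem_enum !inE negb_or hp1 hp2 xR0.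
case: (fold_done t (todo ms) _ Hr x xt) => [h|h]; first by rewrite xR in h.
by move: h; rewrite !inE (negbTE hc1) (negbTE hc2).
Qed.

Lemma round_cost t ms : (mcost (round v c B u0 tie t ms) <= mcost ms + 4 * n)%N.
Proof.
rewrite round_eq /=.
have [_ _ _ b4 _] := fold_mono t (todo ms) (RS (mR ms) (mp ms) set0 set0 false (mcost ms)).
apply: (leq_trans b4) => /=; rewrite leq_add2l leq_mul2l /=.
rewrite /todo size_filter; apply: (leq_trans (count_size _ _)); by rewrite size_enum_ord.
Qed.


Lemma sum_sub (A Bs : {set 'I_n}) (F : 'I_n -> R) : A \subset Bs -> (forall x, 0 <= F x) ->
  \sum_(x in A) F x <= \sum_(x in Bs) F x.
Proof.
move=> AB hF; rewrite [X in _ <= X](big_setID A) /=.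
have -> : Bs :&: A = A by apply/setIidPr.
have : 0 <= \sum_(x in Bs :\: A) F x by apply: sumr_ge0.
lra.
Qed.

Lemma cost_ge0 (A : {set 'I_n}) : 0 <= cost_of c A.
Proof. by apply: sumr_ge0. Qed.

Lemma cost_sub (A Bs : {set 'I_n}) : A \subset Bs -> cost_of c A <= cost_of c Bs.
Proof. move=> h; apply: sum_sub => //. Qed.

Lemma core1 (S1 W Zs : {set 'I_n}) (r : R) : 0 <= r ->
  (forall x, x \in Zs -> x \notin S1) ->
  (forall x, x \in Zs -> B * marg v S1 x < c x * r) ->
  v (S1 :|: W) <= v S1 + \sum_(u in W :\: S1 :\: Zs) marg v S1 u + r * (cost_of c (W :&: Zs) / B).
Proof.
move=> hr HZ1 HZ.
have E : S1 :|: W = S1 :|: (W :\: S1).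
  by apply/setP => x; rewrite !inE; case: (x \in S1); case: (x \in W).
rewrite E.
have h2 : v (S1 :|: W :\: S1) <= v S1 + \sum_(u in W :\: S1) marg v S1 u.
  by apply: sum_bound => // u; rewrite !inE => /andP [].
apply: (le_trans h2).
rewrite (big_setID Zs) /= -addrA lerD2l addrC lerD2l.
have h3 : \sum_(u in (W :\: S1) :&: Zs) marg v S1 u <= \sum_(u in (W :\: S1) :&: Zs) (c u * r / B).
  apply: ler_sum => u; rewrite !inE => /andP [_ uZ].
  have := HZ u uZ; rewrite -(ltr_pM2l Bpos) => h.
  rewrite ler_pdivlMr // mulrC; exact: ltW (HZ u uZ).
apply: (le_trans h3).
have h4 : \sum_(u in (W :\: S1) :&: Zs) (c u * r / B) <= \sum_(u in W :&: Zs) (c u * r / B).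
  apply: sum_sub.
    by apply/subsetP => x; rewrite !inE => /andP [/andP [_ ->] ->].
  move=> x; apply: divr_ge0; last exact: ltW.
  exact: mulr_ge0.
apply: le_trans h4 _; rewrite /cost_of mulr_suml mulrC mulr_suml.
by apply: ler_sum => u _; rewrite mulrAC.
Qed.


Lemma round_bound t R0 (ms' : mstate R n) (W : {set 'I_n}) : 0 < rho1 -> Inv t R0 (rs_of ms') ->
  v W <= v (mcur1 ms') + v (mcur2 ms')
    + \sum_(u in W :\: mcur1 ms' :\: (R0 :\: mR ms')) marg v (mcur1 ms') u
    + \sum_(u in W :\: mcur2 ms' :\: (R0 :\: mR ms')) marg v (mcur2 ms') u
    + 2 * (rh t * (cost_of c (W :&: (R0 :\: mR ms')) / B)).
Proof.
move=> hp I; case: I => /= Id I1 I2 IR I0 Iv1 Iv2 Ip _ Ipos.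
have [C12 C21 Rj] := Ipos hp.
have h0 : v W <= v (W :|: mcur1 ms') + v (W :|: mcur2 ms') by apply: split_disj.
have hr := rho_ge0 t.
have hA : v (mcur1 ms' :|: W) <= v (mcur1 ms')
    + \sum_(u in W :\: mcur1 ms' :\: (R0 :\: mR ms')) marg v (mcur1 ms') u
    + rh t * (cost_of c (W :&: (R0 :\: mR ms')) / B).
  apply: core1 => //.
    move=> x; rewrite !inE => /andP [xR _]; apply/negP => /(subsetP I1); by rewrite (negbTE xR).
  move=> x xZ; apply: Rj => //; first by left.
  move: xZ; rewrite !inE => /andP [xR _]; apply/negP => /(subsetP I1); by rewrite (negbTE xR).
have hB : v (mcur2 ms' :|: W) <= v (mcur2 ms')
    + \sum_(u in W :\: mcur2 ms' :\: (R0 :\: mR ms')) marg v (mcur2 ms') u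
    + rh t * (cost_of c (W :&: (R0 :\: mR ms')) / B).
  apply: core1 => //.
    move=> x; rewrite !inE => /andP [xR _]; apply/negP => /(subsetP I2); by rewrite (negbTE xR).
  move=> x xZ; apply: Rj => //; first by right.
  move: xZ; rewrite !inE => /andP [xR _]; apply/negP => /(subsetP I2); by rewrite (negbTE xR).
rewrite setUC in hA; rewrite setUC in hB.
lra.
Qed.

Lemma round_full t R0 (ms' : mstate R n) (W : {set 'I_n}) : 0 < rho1 -> Inv t R0 (rs_of ms') ->
  W \subset (R0 :\: mR ms') :|: (mcur1 ms' :|: mcur2 ms') ->
  v W <= 2 * (v (mcur1 ms') + v (mcur2 ms')) + 2 * (rh t * (cost_of c (W :&: (R0 :\: mR ms')) / B)).
Proof.
move=> hp I hW; have h := round_bound t R0 ms' W hp I.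
case: I => /= Id I1 I2 IR I0 Iv1 Iv2 Ip _ Ipos.
have [C12 C21 Rj] := Ipos hp.
have s1 : \sum_(u in W :\: mcur1 ms' :\: (R0 :\: mR ms')) marg v (mcur1 ms') u <= v (mcur2 ms').
  apply: C12 => //.
    apply/subsetP => x; rewrite !inE => /andP [xZ /andP [x1 xW]].
    move/subsetP: hW => /(_ x xW); rewrite !inE (negbTE x1) /=.
    by case/orP => // /andP [a b]; move: xZ; rewrite a b.
  by move=> x; rewrite !inE => /andP [_ /andP [] ].
have s2 : \sum_(u in W :\: mcur2 ms' :\: (R0 :\: mR ms')) marg v (mcur2 ms') u <= v (mcur1 ms').
  apply: C21 => //.
    apply/subsetP => x; rewrite !inE => /andP [xZ /andP [x2 xW]].
    move/subsetP: hW => /(_ x xW); rewrite !inE (negbTE x2) /= orbF.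
    by case/orP => // /andP [a b]; move: xZ; rewrite a b.
  by move=> x; rewrite !inE => /andP [_ /andP [] ].
lra.
Qed.

Lemma round_rej t R0 (ms' : mstate R n) (W : {set 'I_n}) : 0 < rho1 -> Inv t R0 (rs_of ms') ->
  W \subset (R0 :\: mR ms') ->
  v W <= 2 * rh t + 2 * (rh t * (cost_of c W / B)).
Proof.
move=> hp I hW; have h := round_bound t R0 ms' W hp I.
have E : forall S : {set 'I_n}, W :\: S :\: (R0 :\: mR ms') = set0.
  move=> S; apply/setP => x; rewrite !inE.
  case xW: (x \in W); last by rewrite !andbF.
  by move/subsetP: hW => /(_ x xW); rewrite !inE => ->.
have E2 : W :&: (R0 :\: mR ms') = W by apply/setIidPl.
rewrite !E !big_set0 E2 in h.
case: I => /= _ _ _ _ _ Iv1 Iv2 _ _ _.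
lra.
Qed.


Local Notation sta := (state v c B u0 tie).

Lemma ginv k : GInv (sta k).
Proof.
elim: k => [|k G]; first by split => x /=; rewrite ?inE.
have I := round_inv k.+2 (sta k) G.
have IR : mR (sta k.+1) \subset mR (sta k) := i_RR0 I.
have I0 := i_R0 I.
have Ip : forall x, x \in mR (sta k.+1) -> c x <= mp (sta k.+1) x := i_price I.
split => x xR; [apply: I0; exact: (subsetP IR) | exact: Ip].
Qed.

Lemma st_inv k : Inv k.+2 (mR (sta k)) (rs_of (sta k.+1)).
Proof. exact: round_inv (ginv k). Qed.

Lemma cost_k k : (mcost (sta k) <= #|[set u | (c u <= B)%R]| + 4 * n * k)%N.
Proof.
elim: k => [|k IH] /=; first by rewrite muln0 addn0.
apply: leq_trans (round_cost k.+2 (sta k)) _.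
by rewrite mulnS [X in (_ <= X)%N]addnCA [X in (X <= _)%N]addnC leq_add2l.
Qed.

Lemma Rk_mono k : mR (sta k.+1) \subset mR (sta k).
Proof. exact: (i_RR0 (st_inv k)). Qed.

Lemma Rk_sub0 k : mR (sta k) \subset mR (sta 0).
Proof.
elim: k => [|k IH]; first exact: subxx.
exact: subset_trans (Rk_mono k) IH.
Qed.

Lemma Rk_monoW i j : (i <= j)%N -> mR (sta j) \subset mR (sta i).
Proof.
move=> /subnK <-; elim: (j - i)%N => [|d IH]; first exact: subxx.
rewrite addSn; exact: subset_trans (Rk_mono _) IH.
Qed.

Lemma cur_bound k (S : {set 'I_n}) : S \subset mR (sta k) -> v S <= rho1 *+ n.
Proof.
move=> hS.
have h : v S <= rho1 *+ #|S|.
  apply: vsingle_bound => // u uS; apply: u0max.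
  have [G1 _] := ginv k; apply: G1; exact: (subsetP hS u uS).
apply: (le_trans h); rewrite -[rho1 *+ n]mulr_natr -[rho1 *+ #|S|]mulr_natr; apply: ler_wpM2l; first exact: rho1_ge0.
by rewrite ler_nat; apply: leq_trans (max_card _) _; rewrite card_ord.
Qed.

Lemma stop_at : stopc (sta (trunc_log 2 n).+1).
Proof.
set L := trunc_log 2 n.
apply/negPn/negP => H.
have h := round_stop L.+2 (sta L) (ginv L) H.
have I := st_inv L.
have b1 : v (mcur1 (sta L.+1)) <= rho1 *+ n by apply: (cur_bound L.+1); exact: (i_S1R I).
have b2 : v (mcur2 (sta L.+1)) <= rho1 *+ n by apply: (cur_bound L.+1); exact: (i_S2R I).
have hn : (n.+1 <= 2 ^ L.+1)%N by apply: trunc_log_ltn.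
have h2 : (n.+1)%:R <= alpha R ^+ L.+1.
  apply: le_trans (_ : (2 ^ L.+1)%:R <= _); first by rewrite ler_nat.
  rewrite natrX; apply: lerXn2r; rewrite ?nnegrE ?ler0n //; last exact: alpha_ge2.
  have := alpha_ge2; lra.
have h3 : rho1 *+ n + rho1 <= rh L.+2.
  have -> : rho1 *+ n + rho1 = (n.+1)%:R * rho1 by rewrite mulr_natl mulrSr.
  rewrite /rho /=; apply: ler_wpM2r => //; exact: rho1_ge0.
case: h => h; lra.
Qed.


Lemma better_ge (A A' : {set 'I_n}) : v A <= v (better v A A') /\ v A' <= v (better v A A').
Proof. rewrite /better; case: ltP => h; split => //; exact: ltW. Qed.

Lemma output_ge (ms : mstate R n) :
  [/\ v (mprev1 ms) <= v (output v ms), v (mprev2 ms) <= v (output v ms),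
      v (mcur1 ms) <= v (output v ms) & v (mcur2 ms) <= v (output v ms)].
Proof.
rewrite /output /=.
set b1 := better v (mprev1 ms) (mprev2 ms).
set b2 := better v b1 (mcur1 ms).
have [h1 h2] := better_ge (mprev1 ms) (mprev2 ms).
have [h3 h4] := better_ge b1 (mcur1 ms).
have [h5 h6] := better_ge b2 (mcur2 ms).
split; rewrite -/b1 -/b2 in h1 h2 h3 h4 h5 h6 *; lra.
Qed.

Definition Rk k := mR (sta k).
Arguments Rk : simpl never.
Definition Zk k := Rk k.-1 :\: Rk k.
Arguments Zk : simpl never.
Lemma ZkS k : Zk k.+1 = Rk k :\: Rk k.+1. Proof. by []. Qed.

Lemma setE1 (O A Bq Cq : {set 'I_n}) : Cq \subset Bq -> Bq \subset A ->
  O :&: (A :\: Cq) = (O :&: (A :\: Bq)) :|: (O :&: (Bq :\: Cq)).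
Proof.
move=> /subsetP h1 /subsetP h2; apply/setP => x; rewrite !inE.
move: (h1 x) (h2 x); case: (x \in Cq); case: (x \in Bq); case: (x \in A); case: (x \in O) => //= a b;
  first [by move: (a isT) | by move: (b isT)].
Qed.

Lemma setE2 (O A Bq Cq : {set 'I_n}) : Cq \subset Bq -> Bq \subset A ->
  (O :&: (A :\: Cq)) :&: Bq = O :&: (Bq :\: Cq) /\ (O :&: (A :\: Cq)) :\: Bq = O :&: (A :\: Bq).
Proof.
move=> /subsetP h1 /subsetP h2; split; apply/setP => x; rewrite !inE;
move: (h1 x) (h2 x); case: (x \in Cq); case: (x \in Bq); case: (x \in A); case: (x \in O) => //= a b;
  first [by move: (a isT) | by move: (b isT)].
Qed.

Lemma RkS k : Rk k.+1 \subset Rk k. Proof. exact: Rk_mono. Qed.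
Lemma Rk0 k : Rk k \subset Rk 0. Proof. exact: Rk_sub0. Qed.

Lemma decomp_v (O : {set 'I_n}) j :
  v (O :&: (Rk 0 :\: Rk j)) <= \sum_(0 <= i < j) v (O :&: Zk i.+1).
Proof.
elim: j => [|j IH]; first by rewrite setDv setI0 v0 big_geq.
rewrite big_nat_recr //= ZkS.
rewrite (setE1 O (Rk 0) (Rk j) (Rk j.+1) (RkS j) (Rk0 j)).
have := subadd vge0 vsub (O :&: (Rk 0 :\: Rk j)) (O :&: (Rk j :\: Rk j.+1)).
lra.
Qed.

Lemma decomp_c (O : {set 'I_n}) j :
  \sum_(0 <= i < j) cost_of c (O :&: Zk i.+1) = cost_of c (O :&: (Rk 0 :\: Rk j)).
Proof.
elim: j => [|j IH]; first by rewrite setDv setI0 big_geq // /cost_of big_set0.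
rewrite big_nat_recr //= IH ZkS /cost_of [in RHS](big_setID (Rk j)).
have [E1 E2] := setE2 O (Rk 0) (Rk j) (Rk j.+1) (RkS j) (Rk0 j).
by rewrite E1 E2 addrC.
Qed.


Lemma bound_rej k (O : {set 'I_n}) : 0 < rho1 ->
  v (O :&: Zk k.+1) <= 2 * rh k.+2 + 2 * (rh k.+2 * (cost_of c (O :&: Zk k.+1) / B)).
Proof.
move=> hp.
have hW : O :&: Zk k.+1 \subset mR (sta k) :\: mR (sta k.+1) by exact: subsetIr.
exact: (round_rej k.+2 (mR (sta k)) (sta k.+1) (O :&: Zk k.+1) hp (st_inv k) hW).
Qed.

Lemma q_mono t (a b : R) : a <= b -> rh t * (a / B) <= rh t * (b / B).
Proof.
move=> h; apply: ler_wpM2l; first exact: rho_ge0.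
by rewrite ler_pM2r // invr_gt0.
Qed.

Lemma bound_full k (O : {set 'I_n}) : 0 < rho1 ->
  v (O :&: (Zk k.+1 :|: (mcur1 (sta k.+1) :|: mcur2 (sta k.+1)))) <=
  2 * (v (mcur1 (sta k.+1)) + v (mcur2 (sta k.+1))) + 2 * (rh k.+2 * (cost_of c (O :&: Zk k.+1) / B)).
Proof.
move=> hp.
set W := O :&: (Zk k.+1 :|: (mcur1 (sta k.+1) :|: mcur2 (sta k.+1))).
have hW : W \subset (mR (sta k) :\: mR (sta k.+1)) :|: (mcur1 (sta k.+1) :|: mcur2 (sta k.+1)).
  exact: subsetIr.
have h := round_full k.+2 (mR (sta k)) (sta k.+1) W hp (st_inv k) hW.
apply: (le_trans h); rewrite lerD2l ler_pM2l //.
apply: q_mono; apply: cost_sub.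
apply/subsetP => x; rewrite !inE => /andP [/andP [-> _] h2].
exact: h2.
Qed.

Lemma rhS k : rh k.+2 = alpha R * rh k.+1.
Proof. by rewrite /rho exprS mulrA. Qed.

Lemma rh_mono a b : (a <= b)%N -> rh a <= rh b.
Proof.
move=> h; rewrite /rho; apply: ler_wpM2r; first exact: rho1_ge0.
apply: ler_weXn2l; first by have := alpha_ge2; lra.
by rewrite -!subn1; exact: leq_sub2r.
Qed.

Lemma geom j : (alpha R - 1) * \sum_(0 <= i < j) rh i.+2 = rh j.+2 - rh 2.
Proof.
elim: j => [|j IH]; first by rewrite big_geq // mulr0 subrr.
rewrite big_nat_recr //= mulrDr IH (rhS j.+1); ring.
Qed.


Lemma cover (O R0 Ra Rb Rc P C : {set 'I_n}) : O \subset R0 -> Rc \subset Rb -> Rb \subset Ra ->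
  Ra \subset R0 -> Rc \subset P :|: C ->
  O = O :&: (R0 :\: Ra) :|: O :&: ((Ra :\: Rb) :|: P) :|: O :&: ((Rb :\: Rc) :|: C).
Proof.
move=> /subsetP h1 /subsetP h2 /subsetP h3 /subsetP h4 /subsetP h5.
apply/setP => x; rewrite !inE.
move: (h1 x) (h2 x) (h3 x) (h4 x) (h5 x); rewrite !inE.
case: (x \in O); case: (x \in R0); case: (x \in Ra); case: (x \in Rb); case: (x \in Rc);
  case: (x \in P); case: (x \in C) => //= a b c' d e;
  first [by move: (a isT) | by move: (b isT) | by move: (c' isT) | by move: (d isT) | by move: (e isT)].
Qed.

Lemma O_sub (O : {set 'I_n}) : cost_of c O <= B -> O \subset Rk 0.
Proof.
move=> hO; apply/subsetP => x xO.
have : x \in [set u | c u <= B]; last by [].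
rewrite inE; apply: le_trans hO; rewrite /cost_of (bigD1 x) //=.
have : 0 <= \sum_(i in O | i != x) c i by apply: sumr_ge0.
lra.
Qed.

Lemma stop_sub K : stopc (sta K) ->
  Rk K \subset (mprev1 (sta K) :|: mprev2 (sta K)) :|: (mcur1 (sta K) :|: mcur2 (sta K)).
Proof. by rewrite /stopc setD_eq0 !setUA. Qed.


Lemma approx_common K' (O : {set 'I_n}) : 0 < rho1 -> cost_of c O <= B -> stopc (sta K'.+1) ->
  v O <= v (O :&: (Rk 0 :\: Rk K'.-1))
       + v (O :&: ((Rk K'.-1 :\: Rk K') :|: (mprev1 (sta K'.+1) :|: mprev2 (sta K'.+1))))
       + 4 * v (output v (sta K'.+1)) + 2 * (rh K'.+2 * (cost_of c (O :&: Zk K'.+1) / B)).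
Proof.
move=> hp hO Hst.
have [hp1 hp2 hc1 hc2] := output_ge (sta K'.+1).
have OR : O \subset Rk 0 := O_sub O hO.
have Hsub : Rk K'.+1 \subset Rk K' := RkS K'.
have Hsub2 : Rk K' \subset Rk K'.-1 := Rk_monoW _ _ (leq_pred K').
have Hsub3 : Rk K'.-1 \subset Rk 0 := Rk0 _.
have Hst' := stop_sub _ Hst.
have EO := cover _ _ _ _ _ _ _ OR Hsub Hsub2 Hsub3 Hst'.
set A := O :&: (Rk 0 :\: Rk K'.-1) in EO *.
set Bp := O :&: ((Rk K'.-1 :\: Rk K') :|: (mprev1 (sta K'.+1) :|: mprev2 (sta K'.+1))) in EO *.
set C := O :&: ((Rk K' :\: Rk K'.+1) :|: (mcur1 (sta K'.+1) :|: mcur2 (sta K'.+1))) in EO.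
have hv : v O <= v A + v Bp + v C.
  rewrite {1}EO; have := subadd vge0 vsub (A :|: Bp) C; have := subadd vge0 vsub A Bp; lra.
have hC : v C <= 2 * (v (mcur1 (sta K'.+1)) + v (mcur2 (sta K'.+1)))
     + 2 * (rh K'.+2 * (cost_of c (O :&: Zk K'.+1) / B)) := bound_full K' O hp.
lra.
Qed.


Definition qz (O : {set 'I_n}) k := cost_of c (O :&: Zk k) / B.

Lemma rh1 : rh 1 = rho1. Proof. by rewrite /rho expr0 mul1r. Qed.

Lemma approx K (O : {set 'I_n}) : (0 < K)%N -> stopc (sta K) ->
  (forall k', (0 < k')%N -> (k' < K)%N -> ~~ stopc (sta k')) -> cost_of c O <= B ->
  v O <= (12 + 4 * Num.sqrt 3) * v (output v (sta K)).
Proof.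
case: K => // K' _ Hst Hmin hO.
have [hp1 hp2 hc1 hc2] := output_ge (sta K'.+1).
have [X XE] : {X | v (output v (sta K'.+1)) = X} by eexists.
rewrite XE in hp1 hp2 hc1 hc2 *.
have X0 : 0 <= X by rewrite -XE; apply: vge0.
have s1 := sqrt3_ge1.
have ss : Num.sqrt (3 : R) * Num.sqrt 3 = 3 by rewrite -expr2 sqr_sqrtr // ler0n.
have aE : alpha R = 1 + Num.sqrt 3 by [].
set s := Num.sqrt (3 : R) in s1 ss aE *.
have hs3 : s <= 3 by nra.
have OR : O \subset Rk 0 := O_sub O hO.
have cO : cost_of c O / B <= 1 by rewrite ler_pdivrMr // mul1r.
case: (ltrP 0 rho1) => hp; last first.
  have r0 : rho1 = 0 by apply/le_anti; rewrite hp rho1_ge0.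
  have : v O <= rho1 *+ #|O|.
    apply: vsingle_bound => // u uO; apply: u0max.
    have : u \in [set u | c u <= B] := subsetP OR u uO.
    by rewrite inE.
  rewrite r0 mul0rn => h; apply: le_trans h _; apply: mulr_ge0 => //; lra.
have hcom := approx_common K' O hp hO Hst.
rewrite XE in hcom.
have q1 : cost_of c (O :&: Zk K'.+1) / B <= 1.
  apply: le_trans cO; rewrite ler_pM2r ?invr_gt0 //; apply: cost_sub; exact: subsetIl.
have q0 : 0 <= cost_of c (O :&: Zk K'.+1) / B.
  apply: divr_ge0; [exact: cost_ge0 | exact: ltW].
case: K' Hst Hmin hp1 hp2 hc1 hc2 XE hcom q1 q0 => [|j] Hst Hmin hp1 hp2 hc1 hc2 XE hcom q1 q0.
-
  have EA : O :&: (Rk 0 :\: Rk 0.-1) = set0 by rewrite setDv setI0.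
  have EB : O :&: ((Rk 0.-1 :\: Rk 0) :|: (mprev1 (sta 1) :|: mprev2 (sta 1))) = O :&: [set u0].
    have -> : Rk 0.-1 :\: Rk 0 = set0 by apply: setDv.
    have -> : mprev1 (sta 1) = [set u0] by [].
    have -> : mprev2 (sta 1) = set0 by [].
    by rewrite set0U setU0.
  rewrite EA EB v0 in hcom.
  have hB : v (O :&: [set u0]) <= X.
    have : O :&: [set u0] \subset [set u0] by exact: subsetIr.
    rewrite subset1 => /orP [/eqP ->|/eqP ->]; last by rewrite v0.
    exact: hp1.
  have h2 : rh 2 * (cost_of c (O :&: Zk 1) / B) <= rh 2 by apply: ler_piMr => //; exact: rho_ge0.
  have h3 : rh 2 = alpha R * rho1 by rewrite rhS rh1.
  have h4 : alpha R * rho1 <= alpha R * X.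
    apply: ler_wpM2l; first by have := alpha_ge2; lra.
    exact: hp1.
  rewrite aE in h4 h3; nra.
-
  have hq0 : forall i, 0 <= qz O i.
    move=> i; apply: divr_ge0; [exact: cost_ge0 | exact: ltW].
  have hcom' : v O <= v (O :&: (Rk 0 :\: Rk j))
       + v (O :&: ((Rk j :\: Rk j.+1) :|: (mcur1 (sta j.+1) :|: mcur2 (sta j.+1))))
       + 4 * X + 2 * (rh j.+3 * qz O j.+2) := hcom.
  have hA : v (O :&: (Rk 0 :\: Rk j)) <= \sum_(0 <= i < j) v (O :&: Zk i.+1) := decomp_v O j.
  have hA2 : \sum_(0 <= i < j) v (O :&: Zk i.+1) <=
             \sum_(0 <= i < j) (2 * rh i.+2 + 2 * (rh i.+2 * qz O i.+1)).
    apply: ler_sum_nat => i _; exact: bound_rej.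
  rewrite big_split /= -!mulr_sumr in hA2.
  have hBp : v (O :&: ((Rk j :\: Rk j.+1) :|: (mcur1 (sta j.+1) :|: mcur2 (sta j.+1)))) <=
      2 * (v (mcur1 (sta j.+1)) + v (mcur2 (sta j.+1))) + 2 * (rh j.+2 * qz O j.+1) :=
    bound_full j O hp.
  have hp1' : v (mcur1 (sta j.+1)) <= X := hp1.
  have hp2' : v (mcur2 (sta j.+1)) <= X := hp2.
  have ns : ~~ stopc (sta j.+1) := Hmin j.+1 isT (ltnSn _).
  have hst : rh j.+2 < v (mcur1 (sta j.+1)) + rho1 \/ rh j.+2 < v (mcur2 (sta j.+1)) + rho1 :=
    round_stop j.+2 (sta j) (ginv j) ns.
  have hr : rh j.+2 < X + rho1 by case: hst => h; lra.
  have hgeo := geom j.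
  have hr2 : rh 2 = alpha R * rho1 by rewrite rhS rh1.
  have hr2le : rh 2 <= rh j.+2 by apply: rh_mono.
  have h3 : rh j.+3 = alpha R * rh j.+2 := rhS j.+1.
  have hcs : \sum_(0 <= i < j.+2) cost_of c (O :&: Zk i.+1) <= B.
    rewrite decomp_c; apply: le_trans hO; apply: cost_sub; exact: subsetIl.
  have hqs : \sum_(0 <= i < j) qz O i.+1 + qz O j.+1 + qz O j.+2 <= 1.
    have : \sum_(0 <= i < j.+2) qz O i.+1 <= 1.
      rewrite /qz -mulr_suml ler_pdivrMr // mul1r; exact hcs.
    by rewrite !big_nat_recr.
  have hQ : \sum_(0 <= i < j) rh i.+2 * qz O i.+1 <= rh j.+3 * \sum_(0 <= i < j) qz O i.+1.
    rewrite mulr_sumr; apply: ler_sum_nat => i /andP [_ hi]; apply: ler_wpM2r; first exact: hq0.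
    by apply: rh_mono; rewrite !ltnS ltnW // ltnW.
  have hT : rh j.+2 * qz O j.+1 <= rh j.+3 * qz O j.+1.
    by apply: ler_wpM2r; [exact: hq0 | apply: rh_mono].
  have hsum : rh j.+3 * (\sum_(0 <= i < j) qz O i.+1) + rh j.+3 * qz O j.+1 + rh j.+3 * qz O j.+2
      <= rh j.+3.
    by rewrite -!mulrDr; apply: ler_piMr => //; exact: rho_ge0.
  have hG0 : 0 <= rh 2 by exact: rho_ge0.
  set G := \sum_(0 <= i < j) rh i.+2 in hA2 hgeo.
  set r := rh j.+2 in hr hr2le h3 hT hgeo hBp.
  set r3 := rh j.+3 in h3 hT hsum hQ hcom'.
  have key0 : v O <= 2 * G + 8 * X + 2 * r3 by lra.
  rewrite aE in hgeo hr2 h3.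
  have sp : 0 < s by lra.
  have hsG : s * G <= r by lra.
  have hsr : s * r < X + s * X.
    have : (1 + s) * r < (1 + s) * (X + rho1) by rewrite ltr_pM2l //; lra.
    lra.
  have e1 : s * (s * r) = 3 * r by rewrite mulrA ss.
  have e2 : s * (s * X) = 3 * X by rewrite mulrA ss.
  have h3r : s * (s * r) <= s * (X + s * X) by apply: ler_wpM2l; lra.
  have hsX : s * X <= 3 * X by apply: ler_wpM2r.
  have key : s * (2 * G + 8 * X + 2 * r3) <= s * ((12 + 4 * s) * X).
    rewrite h3; lra.
  rewrite ler_pM2l // in key; lra.
Qed.


Lemma main_sec : exists k : nat,
  [/\ (0 < k)%N,
      stops v c B u0 tie k,
      (forall k', (0 < k')%N -> (k' < k)%N -> ~~ stops v c B u0 tie k'),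
      (forall O : {set 'I_n}, cost_of c O <= B ->
         v O / (12 + 4 * Num.sqrt 3) <= v (output v (state v c B u0 tie k)))
    & (total_cost (state v c B u0 tie k) <= 9 * n * (trunc_log 2 n).+1)%N].
Proof.
have exP : exists k, (0 < k)%N && stopc (sta k) by exists (trunc_log 2 n).+1; rewrite stop_at.
case: (ex_minnP exP) => K /andP [K0 HK] Hmin.
have Hmin' : forall k', (0 < k')%N -> (k' < K)%N -> ~~ stopc (sta k').
  move=> k' k0 kK; apply/negP => hs.
  have := Hmin k'; rewrite k0 hs /= => /(_ isT); by rewrite leqNgt kK.
exists K; split => //.
- move=> O hO; have hpos : 0 < 12 + 4 * Num.sqrt (3 : R) by have := sqrt3_ge1; lra.
  rewrite ler_pdivrMr // mulrC; exact: approx K O K0 HK Hmin' hO.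
- have hK : (K <= (trunc_log 2 n).+1)%N by apply: Hmin; rewrite stop_at.
  have hc := cost_k K.
  have hcard : (#|[set u | (c u <= B)%R]| <= n)%N by apply: leq_trans (max_card _) _; rewrite card_ord.
  have hn : (0 < n)%N := leq_ltn_trans (leq0n u0) (ltn_ord u0).
  rewrite /total_cost; nia.
Qed.

End Mech.

Theorem theorem5p4 :
  exists C : nat,
  forall (R : realType) (n : nat) (v : {set 'I_n} -> R) (c : 'I_n -> R) (B : R)
         (u0 : 'I_n) (tie : nat -> 'I_n -> bool),
    v set0 = 0 ->
    (forall S, 0 <= v S) ->
    submodular_val v ->
    (forall u, 0 <= c u) ->
    0 < B ->
    c u0 <= B ->
    (forall u, c u <= B -> v [set u] <= v [set u0]) ->
    exists k : nat,
      [/\ (0 < k)%N,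
          stops v c B u0 tie k,
          (forall k', (0 < k')%N -> (k' < k)%N -> ~~ stops v c B u0 tie k'),
          (forall O : {set 'I_n}, cost_of c O <= B ->
             v O / (12 + 4 * Num.sqrt 3) <= v (output v (state v c B u0 tie k)))
        & (total_cost (state v c B u0 tie k) <= C * n * (trunc_log 2 n).+1)%N].
Proof.
exists 9%N => R n v c B u0 tie h0 h1 h2 h3 h4 h5 h6.
by apply: main_sec.
Qed.
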